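(* Let $\mathfrak{g}$ be a finite-dimensional complex Lie algebra and let $a\in\mathfrak{g}^*$ be regular. Then the algebra of shifts of semi-invariants $\mathcal{F}^{\mathrm{si}}_a$ is commutative with respect to both the Lie–Poisson bracket $\{\cdot,\cdot\}$ and the frozen argument bracket $\{\cdot,\cdot\}_a$.
   Context: $S(\mathfrak{g})$ is identified with polynomial functions on $\mathfrak{g}^*$; $df(x)\in\mathfrak{g}\simeq T^*_x\mathfrak{g}^*$. Lie–Poisson bracket: $\{f,h\}(x)=\langle x,[df(x),dh(x)]\rangle$; frozen argument bracket: $\{f,h\}_a(x)=\langle a,[df(x),dh(x)]\rangle$. $\mathfrak{g}_x=\{\xi\in\mathfrak{g}\mid \operatorname{ad}^*_\xi x=0\}$, $\operatorname{ind}\mathfrak{g}=\min_x\dim\mathfrak{g}_x$, $a$ regular means $\dim\mathfrak{g}_a=\operatorname{ind}\mathfrak{g}$. Algebra of shifts $\mathcal{F}_a$: choose $m=\operatorname{ind}\mathfrak{g}$ local analytic invariants $f_1,\dots,f_m$ of the coadjoint representation near $a$ with $df_i(a)$ a basis of $\mathfrak{g}_a$; expand $f_i(a+\lambda x)=\sum_{j\ge0}f_{ij}(x)\lambda^j$; $\mathcal{F}_a$ is generated by all $f_{ij}$, $j>0$. A nonzero $g\in S(\mathfrak{g})$ is a semi-invariant with weight $\chi_g\in\mathfrak{g}^*$ if $\{f,g\}(x)=\chi_g(df(x))g(x)$ for all $f\in S(\mathfrak{g})$. $\mathcal{F}^{\mathrm{si}}_a$ is the subalgebra of $S(\mathfrak{g})$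 generated by $\mathcal{F}_a$ and all functions $x\mapsto g(x+\lambda a)$ for all semi-invariants $g$ and all $\lambda\in\mathbb{C}$. *)

(* Defs.v *)
(* complex numbers R[i] over a realType R (= the field C),
   polynomials S(g) = {mpoly C[n]} (multinomials), linear algebra via mxalgebra. *)
From HB Require Import structures.
From mathcomp Require Import all_boot all_order all_algebra.
From mathcomp Require Import reals.
From mathcomp Require Import complex.
From mathcomp Require Import mpoly.
Set Implicit Arguments. Unset Strict Implicit. Unset Printing Implicit Defensive.
Import GRing.Theory Num.Theory.
Local Open Scope ring_scope.

Section LieDefs.
Variable R : realType.
Local Notation C := R[i].
Variable n : nat.

(* g = C^n (row vectors w.r.t. a basis), g^* = C^n via the dual basis. *)
Definition is_lie_bracket (lie : 'rV[C]_n -> 'rV[C]_n -> 'rV[C]_n) : Prop :=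
  [/\ (forall (c : C) x y z, lie (c *: x + y) z = c *: lie x z + lie y z),
      (forall (c : C) x y z, lie x (c *: y + z) = c *: lie x y + lie x z),
      (forall x, lie x x = 0) &
      (forall x y z, lie x (lie y z) + lie y (lie z x) + lie z (lie x y) = 0)].

Definition pairing (x xi : 'rV[C]_n) : C := \sum_(k < n) x 0 k * xi 0 k.

Definition valu (x : 'rV[C]_n) : 'I_n -> C := fun k => x 0 k.

Definition grad (f : {mpoly C[n]}) (x : 'rV[C]_n) : 'rV[C]_n :=
  \row_(k < n) (mderiv k f).@[valu x].

Variable lie : 'rV[C]_n -> 'rV[C]_n -> 'rV[C]_n.

Definition lp_bracket (f h : {mpoly C[n]}) (x : 'rV[C]_n) : C :=
  pairing x (lie (grad f x) (grad h x)).

Definition frozen_bracket (a : 'rV[C]_n) (f h : {mpoly C[n]}) (x : 'rV[C]_n) : C :=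
  pairing a (lie (grad f x) (grad h x)).

(* the matrix (<x,[e_i,e_j]>)_{i,j}; g_x = {xi | ad^*_xi x = 0} is its row kernel,
   i.e. xi \in g_x  <->  forall eta, <x,[xi,eta]> = 0 *)
Definition bracket_form (x : 'rV[C]_n) : 'M[C]_n :=
  \matrix_(i < n, j < n) pairing x (lie (delta_mx 0 i) (delta_mx 0 j)).

Definition stab_mx (x : 'rV[C]_n) : 'M[C]_n := kermx (bracket_form x).

Definition stab_dim (x : 'rV[C]_n) : nat := \rank (stab_mx x).

Definition is_index (k : nat) : Prop :=
  (exists x, stab_dim x = k) /\ (forall x, (k <= stab_dim x)%N).

Definition regular (a : 'rV[C]_n) : Prop := is_index (stab_dim a).

(* A germ of analytic function at a, given by its Taylor expansion
   f(a + y) = \sum_j F j (y), F j homogeneous of degree j;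
   analyticity = Cauchy-type bound on the coefficients. *)
Definition analytic_germ (F : nat -> {mpoly C[n]}) : Prop :=
  (forall j, F j \is j.-homog) /\
  exists M r : R, 0 < r /\
    forall j m, `|(F j)@_m| <= ((M / r ^+ j)%:C)%C.

(* local invariant of the coadjoint representation near a:
   <x, [xi, df(x)]> = 0 for all xi and all x near a, written out degree by degree
   in y = x - a (identity of convergent power series). *)
Definition local_invariant_at (a : 'rV[C]_n) (F : nat -> {mpoly C[n]}) : Prop :=
  analytic_germ F /\
  forall (d : nat) (xi y : 'rV[C]_n),
    pairing a (lie xi (grad (F d.+1) y)) + pairing y (lie xi (grad (F d) y)) = 0.

(* df(a) for the germ F: the gradient of the linear part *)
Definition germ_diff_at (F : nat -> {mpoly C[n]}) : 'rV[C]_n := grad (F 1%N) 0.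

Definition semi_invariant (g : {mpoly C[n]}) : Prop :=
  g != 0 /\ exists chi : 'rV[C]_n,
    forall (f : {mpoly C[n]}) (x : 'rV[C]_n),
      lp_bracket f g x = pairing chi (grad f x) * g.@[valu x].

Definition shift_poly (a : 'rV[C]_n) (lambda : C) (g : {mpoly C[n]}) : {mpoly C[n]} :=
  g \mPo [tuple 'X_k + (lambda * a 0 k)%:MP | k < n].

End LieDefs.

Inductive gen_subalg (K : comNzRingType) (n : nat) (S : {mpoly K[n]} -> Prop)
  : {mpoly K[n]} -> Prop :=
| gen_base p : S p -> gen_subalg S p
| gen_const c : gen_subalg S c%:MP
| gen_add p q : gen_subalg S p -> gen_subalg S q -> gen_subalg S (p + q)
| gen_mul p q : gen_subalg S p -> gen_subalg S q -> gen_subalg S (p * q).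

(* generators of F_a^si, for a chosen family f of m local invariants *)
Definition Fsi_generators (R : realType) (n : nat)
  (lie : 'rV[R[i]]_n -> 'rV[R[i]]_n -> 'rV[R[i]]_n) (a : 'rV[R[i]]_n) (m : nat)
  (f : 'I_m -> nat -> {mpoly R[i][n]}) (p : {mpoly R[i][n]}) : Prop :=
  (exists (k : 'I_m) (j : nat), (0 < j)%N /\ p = f k j) \/
  (exists (g : {mpoly R[i][n]}) (lambda : R[i]),
      semi_invariant lie g /\ p = shift_poly a lambda g).

(* Main.v *)
From HB Require Import structures.
From mathcomp Require Import all_boot all_order all_algebra.
From mathcomp Require Import reals complex mpoly.
Require Import Defs.
From Stdlib Require Import Classical.
From mathcomp Require Import zify.
From Stdlib Require Import Lia.
Import GRing.Theory Num.Theory.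
Local Open Scope ring_scope.
Set Implicit Arguments.
Unset Strict Implicit.



Section Zero.
Variable K : numFieldType.

Lemma poly_eq0_nz (q : {poly K}) : (forall t, t != 0 -> q.[t] = 0) -> q = 0.
Proof.
move=> H; apply/eqP; apply/negPn/negP => nz.
pose rs := [seq (i.+1)%:R : K | i <- iota 0 (size q)].
have Hall : all (root q) rs.
  apply/allP => t /mapP [i _ ->]; apply/rootP; apply: H.
  by rewrite pnatr_eq0.
have Hu : uniq rs.
  rewrite map_inj_uniq ?iota_uniq // => i j /eqP.
  by rewrite eqr_nat eqSS => /eqP.
by have := max_poly_roots nz Hall Hu; rewrite size_map size_iota ltnn.
Qed.

Definition ext n (v : 'I_n -> K) (t : K) : 'I_n.+1 -> K :=
  fun i => if unlift ord_max i is Some j then v j else t.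

Lemma ext_widen n v t (i : 'I_n) : @ext n v t (widen_ord (leqnSn n) i) = v i.
Proof.
rewrite /ext.
have -> : widen_ord (leqnSn n) i = lift ord_max i by apply/val_inj; rewrite /= /bump leqNgt ltn_ord.
by rewrite liftK.
Qed.

Lemma ext_max n v t : @ext n v t ord_max = t.
Proof. by rewrite /ext unlift_none. Qed.

Lemma muni_eval n (p : {mpoly K[n.+1]}) v t :
  (map_poly (meval v) (muni p)).[t] = p.@[@ext n v t].
Proof.
rewrite muniE (mevalE _ p) raddf_sum horner_sum; apply: eq_bigr => m _.
rewrite /= map_polyZ map_polyXn hornerZ hornerXn /= -mul_mpolyC mevalM mevalC mevalX.
rewrite big_ord_recr /= ext_max mulrA; congr (_ * _ * _).
by apply: eq_bigr => i _; rewrite mnmE ext_widen.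
Qed.

Lemma mpoly_eval_eq0 n (p : {mpoly K[n]}) : (forall v, p.@[v] = 0) -> p = 0.
Proof.
elim: n p => [|n IH] p H.
  have Hp : p = (p@_0)%:MP.
    apply: msize1_polyC; rewrite msizeE.
    by apply/bigmax_leqP_seq => m _ _; rewrite mdegE big_ord0.
  by have := H (fun _ => 0); rewrite Hp mevalC => ->.

have Hu : forall k, (muni p)`_k = 0.
  move=> k; apply: IH => v.
  have : map_poly (meval v) (muni p) = 0.
    by apply: poly_eq0_nz => t _; rewrite muni_eval H.
  move=> Hm; have := congr1 (fun q : {poly K} => q`_k) Hm.
  by rewrite coef_map coef0.
apply/mpolyP => m0; rewrite mcoeff0.
have := congr1 (fun q => q@_[multinom [tuple m0 (widen_ord (leqnSn n) i) | i < n]])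
  (Hu (m0 ord_max)).
rewrite mcoeff0 => <-.
rewrite muniE coef_sum raddf_sum {1}(mpolyE p) raddf_sum /=.
apply: eq_bigr => m _.
rewrite coefZ coefXn mcoeffZ -scalerAl mcoeffZ mcoeffX.
have key : (m == m0) = ([multinom [tuple m (widen_ord (leqnSn n) i) | i < n]] ==
     [multinom [tuple m0 (widen_ord (leqnSn n) i) | i < n]]) && (m0 ord_max == m ord_max).
  apply/eqP/andP => [->|[/eqP r /eqP l]]; first by [].
  apply/mnmP => i; case: (unliftP ord_max i) => [j ->|->]; last by [].
  have := congr1 (fun mm : 'X_{1..n} => mm j) r; rewrite !mnmE /=.
  have -> : lift ord_max j = widen_ord (leqnSn n) j.
    by apply/val_inj; rewrite /= /bump leqNgt ltn_ord.
  by [].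
rewrite key [in RHS]mulr_natr mcoeffMn mcoeffX.
by case: (_ == _); case: (_ == _).
Qed.
End Zero.


Section PolyTools.
Variable K : numFieldType.
Variable n : nat.
Implicit Types (p q : {mpoly K[n]}).

Lemma homog_eval_scale d p (s : K) (v : 'I_n -> K) :
  p \is d.-homog -> p.@[fun i => s * v i] = s ^+ d * p.@[v].
Proof.
move=> Hp; rewrite !mevalE mulr_sumr; apply: eq_big_seq => m mp.
rewrite mulrCA; congr (_ * _).
rewrite (eq_bigr (fun i => s ^+ m i * v i ^+ m i)); last by move=> i _; rewrite exprMn.
by rewrite big_split /= prodrXr -mdegE (dhomog_mf Hp mp).
Qed.

Lemma msupp_mderiv p i m : m \in msupp (p^`M(i)) -> (m + U_(i))%MM \in msupp p.
Proof.
rewrite !mcoeff_msupp mcoeff_mderiv; apply: contra => /eqP ->.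
by rewrite mul0rn.
Qed.

Lemma homog_mderiv d p i : p \is d.-homog -> p^`M(i) \is d.-1.-homog.
Proof.
move=> Hp; apply/dhomogP => m /msupp_mderiv /(dhomog_mf Hp).
move=> H; change (mdeg (m + U_(i))%MM = d) in H; change (mdeg m = d.-1).
by rewrite -H mdegD mdeg1 addn1.
Qed.

Lemma msize_mderiv p i : (msize (p^`M(i)) <= (msize p).-1)%N.
Proof.
rewrite [X in (X <= _)%N]msizeE; apply/bigmax_leqP_seq => m /msupp_mderiv mp _.
have := msize_mdeg_lt mp; rewrite mdegD mdeg1 addn1.
by case: (msize p).
Qed.

Definition linp (c : 'I_n -> K) : {mpoly K[n]} := \sum_i c i *: 'X_i.

Lemma mderiv_linp c j : (linp c)^`M(j) = (c j)%:MP.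
Proof.
rewrite /linp raddf_sum /= (bigD1 j) //= big1 => [|i ij].
  rewrite addr0 mderivZ mderivX mnm1E eqxx.
  have -> : (U_(j) - U_(j))%MM = 0%MM.
    by apply/mnmP => k; rewrite mnmBE subnn mnm0E.
  by rewrite mpolyX0 scale1r alg_mpolyC.
rewrite -mul_mpolyC mderivM mderivC mderivX mnm1E (negbTE ij) scale0r.
by rewrite mul0r mulr0 add0r.
Qed.

Lemma meval_linp c v : (linp c).@[v] = \sum_i c i * v i.
Proof. by rewrite /linp raddf_sum /=; apply: eq_bigr => i _; rewrite mevalZ mevalXU. Qed.


Definition tr (c : 'I_n -> K) : n.-tuple {mpoly K[n]} := [tuple 'X_i + (c i)%:MP | i < n].

Lemma mderivXU i k : ('X_i : {mpoly K[n]})^`M(k) = ((i == k)%:R)%:MP.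
Proof.
rewrite mderivX mnm1E; case: eqP => [->|ne].
  have -> : (U_(k) - U_(k))%MM = 0%MM by apply/mnmP => j; rewrite mnmBE subnn mnm0E.
  by rewrite mpolyX0 scale1r.
by rewrite scale0r.
Qed.

Lemma mderiv_comp_tr p c k : (p \mPo tr c)^`M(k) = (p^`M(k)) \mPo tr c.
Proof.
pose P (q : {mpoly K[n]}) := (q \mPo tr c)^`M(k) = (q^`M(k)) \mPo tr c.
have HM : forall x y : {mpoly K[n]}, (x * y) \mPo tr c = (x \mPo tr c) * (y \mPo tr c).
  by move=> x y; exact: rmorphM.
have HD : forall x y : {mpoly K[n]}, (x + y) \mPo tr c = (x \mPo tr c) + (y \mPo tr c).
  by move=> x y; exact: comp_mpolyD.
have PM q1 q2 : P q1 -> P q2 -> P (q1 * q2).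
  rewrite /P => H1 H2; rewrite !HM mderivM H1 H2 mderivM.
  by rewrite HD !HM.
have P1 : P 1 by rewrite /P -mpolyC1 mderivC !comp_mpolyC mderivC.
have PX i : P 'X_i.
  rewrite /P comp_mpolyXU -tnth_nth tnth_mktuple mderivD mderivC addr0.
  by rewrite !mderivXU comp_mpolyC.
have Pmon m : P 'X_[m].
  rewrite mpolyXE_id; apply: big_ind => // i _.
  elim: (m i) => [|e IH]; first by rewrite expr0.
  by rewrite exprS; apply: PM.
elim/mpolyind: p => [|a m p _ _ IH]; first by rewrite !(comp_mpoly0, mderiv0).
rewrite comp_mpolyD mderivD IH mderivD comp_mpolyD; congr (_ + _).
by rewrite comp_mpolyZ !mderivZ comp_mpolyZ Pmon.
Qed.

Lemma meval_comp_tr p c v : (p \mPo tr c).@[v] = p.@[fun i => v i + c i].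
Proof.
rewrite comp_mpoly_meval; apply: meval_eq => i.
by rewrite tnth_mktuple mevalD mevalXU mevalC.
Qed.

Definition line p (w c : 'I_n -> K) : {poly K} :=
  \sum_(m <- msupp p) p@_m *: \prod_(i < n) ((w i)%:P + c i *: 'X) ^+ m i.

Lemma line_eval p w c s : (line p w c).[s] = p.@[fun i => w i + s * c i].
Proof.
rewrite /line horner_sum mevalE; apply: eq_bigr => m _.
rewrite hornerZ horner_prod; congr (_ * _); apply: eq_bigr => i _.
by rewrite horner_exp hornerD hornerC hornerZ hornerX mulrC.
Qed.

End PolyTools.

Section Basics.
Variable R : realType.
Local Notation C := R[i].
Variable n : nat.
Local Notation V := 'rV[C]_n.
Implicit Types (x y xi eta : V) (p q : {mpoly C[n]}).

Lemma pairingDl x y xi : pairing (x + y) xi = pairing x xi + pairing y xi.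
Proof. rewrite /pairing -big_split; apply: eq_bigr => k _; by rewrite mxE mulrDl. Qed.
Lemma pairingDr x xi eta : pairing x (xi + eta) = pairing x xi + pairing x eta.
Proof. rewrite /pairing -big_split; apply: eq_bigr => k _; by rewrite mxE mulrDr. Qed.
Lemma pairingZl c x xi : pairing (c *: x) xi = c * pairing x xi.
Proof. rewrite /pairing mulr_sumr; apply: eq_bigr => k _; by rewrite mxE mulrA. Qed.
Lemma pairingZr c x xi : pairing x (c *: xi) = c * pairing x xi.
Proof. rewrite /pairing mulr_sumr; apply: eq_bigr => k _; by rewrite mxE mulrCA. Qed.
Lemma pairing0l xi : pairing 0 xi = 0.
Proof. by rewrite -(scale0r 0) pairingZl mul0r. Qed.
Lemma pairing0r x : pairing x 0 = 0.
Proof. by rewrite -(scale0r 0) pairingZr mul0r. Qed.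
Lemma pairingNl x xi : pairing (- x) xi = - pairing x xi.
Proof. by rewrite -scaleN1r pairingZl mulN1r. Qed.
Lemma pairingNr x xi : pairing x (- xi) = - pairing x xi.
Proof. by rewrite -scaleN1r pairingZr mulN1r. Qed.
Lemma pairing_sumr x (I : Type) (r : seq I) (F : I -> V) :
  pairing x (\sum_(i <- r) F i) = \sum_(i <- r) pairing x (F i).
Proof.
elim: r => [|a r IH]; first by rewrite !big_nil pairing0r.
by rewrite !big_cons pairingDr IH.
Qed.
Lemma pairing_suml xi (I : Type) (r : seq I) (F : I -> V) :
  pairing (\sum_(i <- r) F i) xi = \sum_(i <- r) pairing (F i) xi.
Proof.
elim: r => [|a r IH]; first by rewrite !big_nil pairing0l.
by rewrite !big_cons pairingDl IH.
Qed.
Lemma pairingC x y : pairing x y = pairing y x.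
Proof. by rewrite /pairing; apply: eq_bigr => k _; rewrite mulrC. Qed.

Lemma gradD p q x : grad (p + q) x = grad p x + grad q x.
Proof. by apply/rowP => k; rewrite !mxE mderivD mevalD. Qed.
Lemma gradZ c p x : grad (c *: p) x = c *: grad p x.
Proof. by apply/rowP => k; rewrite !mxE mderivZ mevalZ. Qed.
Lemma gradM p q x : grad (p * q) x = p.@[valu x] *: grad q x + q.@[valu x] *: grad p x.
Proof.
apply/rowP => k; rewrite !mxE mderivM mevalD !mevalM.
by rewrite addrC mulrC [q.@[_] * _]mulrC.
Qed.
Lemma gradC c x : grad (c%:MP : {mpoly C[n]}) x = 0.
Proof. by apply/rowP => k; rewrite !mxE mderivC meval0. Qed.
Lemma gradN p x : grad (- p) x = - grad p x.
Proof. by apply/rowP => k; rewrite !mxE mderivN mevalN. Qed.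
Lemma grad0 x : grad (0 : {mpoly C[n]}) x = 0.
Proof. by apply/rowP => k; rewrite !mxE mderiv0 meval0. Qed.

Variable lie : V -> V -> V.
Hypothesis Hlie : is_lie_bracket lie.

Lemma lieDZl c x y z : lie (c *: x + y) z = c *: lie x z + lie y z.
Proof. by case: Hlie. Qed.
Lemma lieDZr c x y z : lie x (c *: y + z) = c *: lie x y + lie x z.
Proof. by case: Hlie. Qed.
Lemma lie0l z : lie 0 z = 0.
Proof.
have H := lieDZl 1 0 0 z; rewrite !scale1r addr0 in H.
by apply: (@addrI _ (lie 0 z)); rewrite addr0 -H.
Qed.
Lemma lie0r z : lie z 0 = 0.
Proof.
have H := lieDZr 1 z 0 0; rewrite !scale1r addr0 in H.
by apply: (@addrI _ (lie z 0)); rewrite addr0 -H.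
Qed.
Lemma lieDl x y z : lie (x + y) z = lie x z + lie y z.
Proof. by rewrite -[x]scale1r lieDZl !scale1r. Qed.
Lemma lieDr x y z : lie z (x + y) = lie z x + lie z y.
Proof. by rewrite -[x]scale1r lieDZr !scale1r. Qed.
Lemma lieZl c x z : lie (c *: x) z = c *: lie x z.
Proof. by rewrite -[c *: x]addr0 lieDZl lie0l addr0. Qed.
Lemma lieZr c x z : lie z (c *: x) = c *: lie z x.
Proof. by rewrite -[c *: x]addr0 lieDZr lie0r addr0. Qed.
Lemma lieNl x z : lie (- x) z = - lie x z.
Proof. by rewrite -scaleN1r lieZl scaleN1r. Qed.
Lemma lieNr x z : lie z (- x) = - lie z x.
Proof. by rewrite -scaleN1r lieZr scaleN1r. Qed.
Lemma lieAC x y : lie x y = - lie y x.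
Proof.
have [_ _ H0 _] := Hlie.
have := H0 (x + y); rewrite lieDl !lieDr !H0 add0r addr0 => /eqP.
by rewrite addr_eq0 => /eqP.
Qed.
Lemma lie_suml z (I : Type) (r : seq I) (F : I -> V) :
  lie (\sum_(i <- r) F i) z = \sum_(i <- r) lie (F i) z.
Proof.
elim: r => [|a r IH]; first by rewrite !big_nil lie0l.
by rewrite !big_cons lieDl IH.
Qed.
Lemma lie_sumr z (I : Type) (r : seq I) (F : I -> V) :
  lie z (\sum_(i <- r) F i) = \sum_(i <- r) lie z (F i).
Proof.
elim: r => [|a r IH]; first by rewrite !big_nil lie0r.
by rewrite !big_cons lieDr IH.
Qed.
Lemma lie_jacobi x y z : lie x (lie y z) + lie y (lie z x) + lie z (lie x y) = 0.
Proof. by case: Hlie. Qed.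

Definition brk (Y : V -> V) p q x := pairing (Y x) (lie (grad p x) (grad q x)).

Lemma brkAC Y p q x : brk Y p q x = - brk Y q p x.
Proof. by rewrite /brk lieAC pairingNr. Qed.
Lemma brkDl Y p1 p2 q x : brk Y (p1 + p2) q x = brk Y p1 q x + brk Y p2 q x.
Proof. by rewrite /brk gradD lieDl pairingDr. Qed.
Lemma brkMl Y p1 p2 q x :
  brk Y (p1 * p2) q x = p1.@[valu x] * brk Y p2 q x + p2.@[valu x] * brk Y p1 q x.
Proof. by rewrite /brk gradM lieDl !lieZl pairingDr !pairingZr. Qed.
Lemma brkCl Y c q x : brk Y c%:MP q x = 0.
Proof. by rewrite /brk gradC lie0l pairing0r. Qed.

Lemma brk_gen Y (S : {mpoly C[n]} -> Prop) :
  (forall p q, S p -> S q -> forall x, brk Y p q x = 0) ->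
  forall p q, gen_subalg S p -> gen_subalg S q -> forall x, brk Y p q x = 0.
Proof.
move=> HS.
have H1 : forall p, S p -> forall q, gen_subalg S q -> forall x, brk Y p q x = 0.
  move=> p Sp q; elim => {q} [q Sq|c|q1 q2 _ IH1 _ IH2|q1 q2 _ IH1 _ IH2] x.
  - exact: HS.
  - by rewrite brkAC brkCl oppr0.
  - by rewrite brkAC brkDl (brkAC Y q1) (brkAC Y q2) IH1 IH2 !oppr0 addr0 oppr0.
  - by rewrite brkAC brkMl (brkAC Y q1) (brkAC Y q2) IH1 IH2 !oppr0 !mulr0 addr0 oppr0.
move=> p q; elim => {p} [p Sp|c|p1 p2 _ IH1 _ IH2|p1 p2 _ IH1 _ IH2] Gq x.
- exact: H1.
- exact: brkCl.
- by rewrite brkDl IH1 // IH2 // addr0.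
- by rewrite brkMl IH1 // IH2 // !mulr0 addr0.
Qed.


Lemma homog0_const p : p \is 0.-homog -> p = (p@_0)%:MP.
Proof.
move=> Hp; apply: msize1_polyC; rewrite msizeE.
apply/bigmax_leqP_seq => m mp _.
by rewrite (dhomog_mf Hp mp).
Qed.

Lemma grad_homog0 p x : p \is 0.-homog -> grad p x = 0.
Proof. by move=> /homog0_const ->; exact: gradC. Qed.

Section FF.
Variable a : V.
Variables F G : nat -> {mpoly C[n]}.
Hypothesis HF : forall d xi y,
  pairing a (lie xi (grad (F d.+1) y)) + pairing y (lie xi (grad (F d) y)) = 0.
Hypothesis HG : forall d xi y,
  pairing a (lie xi (grad (G d.+1) y)) + pairing y (lie xi (grad (G d) y)) = 0.
Hypothesis HF0 : forall y, grad (F 0) y = 0.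
Hypothesis HG0 : forall y, grad (G 0) y = 0.

Lemma FF_lp k : forall j y, pairing y (lie (grad (F j) y) (grad (G k) y)) = 0.
Proof.
elim: k => [|k IH] j y; first by rewrite HG0 lie0r pairing0r.
have c := HG k (grad (F j.+1) y) y.
rewrite IH addr0 in c.
have b := HF j (grad (G k.+1) y) y.
rewrite lieAC pairingNr c oppr0 add0r in b.
by rewrite lieAC pairingNr b oppr0.
Qed.

Lemma FF_fr k j y : pairing a (lie (grad (F j) y) (grad (G k) y)) = 0.
Proof.
case: k => [|k]; first by rewrite HG0 lie0r pairing0r.
have c := HG k (grad (F j) y) y.
by rewrite FF_lp addr0 in c.
Qed.
End FF.

End Basics.



HB.lock Definition ev (R : realType) (n : nat) (p : {mpoly R[i][n]}) (x : 'rV[R[i]]_n) : R[i] :=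
  p.@[valu x].

HB.lock Definition Ham (R : realType) (n : nat) (lie : 'rV[R[i]]_n -> 'rV[R[i]]_n -> 'rV[R[i]]_n)
  (xi : 'rV[R[i]]_n) (p : {mpoly R[i][n]}) : {mpoly R[i][n]} :=
  \sum_k linp (fun i => (lie xi (delta_mx 0 k)) 0 i) * p^`M(k).

Section Lie2.
Variable R : realType.
Local Notation C := R[i].
Variable n : nat.
Local Notation V := 'rV[C]_n.
Implicit Types (x y xi eta : V) (p q g : {mpoly C[n]}).
Variable lie : V -> V -> V.
Hypothesis Hlie : is_lie_bracket lie.
Local Notation lieAC := (lieAC Hlie).
Local Notation lieDl := (lieDl Hlie).
Local Notation lieDr := (lieDr Hlie).
Local Notation lieZl := (lieZl Hlie).
Local Notation lieZr := (lieZr Hlie).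
Local Notation lie0l := (lie0l Hlie).
Local Notation lie0r := (lie0r Hlie).
Local Notation lieNl := (lieNl Hlie).
Local Notation lieNr := (lieNr Hlie).
Local Notation lie_suml := (lie_suml Hlie).
Local Notation lie_sumr := (lie_sumr Hlie).

Lemma evE p x : ev p x = p.@[valu x].
Proof. by rewrite ev.unlock. Qed.
Lemma evD p q x : ev (p + q) x = ev p x + ev q x.
Proof. by rewrite !evE mevalD. Qed.
Lemma evM p q x : ev (p * q) x = ev p x * ev q x.
Proof. by rewrite !evE mevalM. Qed.
Lemma evZ c p x : ev (c *: p) x = c * ev p x.
Proof. by rewrite !evE mevalZ. Qed.
Lemma evN p x : ev (- p) x = - ev p x.
Proof. by rewrite !evE mevalN. Qed.
Lemma evB p q x : ev (p - q) x = ev p x - ev q x.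
Proof. by rewrite !evE mevalB. Qed.
Lemma evC c x : ev (c%:MP) x = c.
Proof. by rewrite !evE mevalC. Qed.
Lemma ev0 x : ev 0 x = 0.
Proof. by rewrite !evE meval0. Qed.
Lemma ev_sum (I : Type) (r : seq I) (F : I -> {mpoly C[n]}) x :
  ev (\sum_(i <- r) F i) x = \sum_(i <- r) ev (F i) x.
Proof.
elim: r => [|a r IH]; first by rewrite !big_nil ev0.
by rewrite !big_cons evD IH.
Qed.
Lemma grad_ev p x k : grad p x 0 k = ev (p^`M(k)) x.
Proof. by rewrite mxE evE. Qed.
Lemma gradM' p q x : grad (p * q) x = ev p x *: grad q x + ev q x *: grad p x.
Proof. by rewrite gradM !evE. Qed.

Lemma eval_eq0 p : (forall x : V, ev p x = 0) -> p = 0.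
Proof.
move=> H; apply: mpoly_eval_eq0 => v.
have := H (\row_i v i); rewrite evE /valu => <-.
by apply: meval_eq => i; rewrite mxE.
Qed.

Lemma eval_neq0 p : p != 0 -> exists x : V, ev p x != 0.
Proof.
move=> nz; apply: NNPP => H; move/eqP: nz; apply; apply: eval_eq0 => x.
by apply/eqP; apply/negPn/negP => hx; apply: H; exists x.
Qed.

Lemma grad_sum (I : Type) (r : seq I) (F : I -> {mpoly C[n]}) x :
  grad (\sum_(i <- r) F i) x = \sum_(i <- r) grad (F i) x.
Proof.
elim: r => [|a r IH]; first by rewrite !big_nil grad0.
by rewrite !big_cons gradD IH.
Qed.

Definition adx xi y : V := \row_j pairing y (lie xi (delta_mx 0 j)).

Lemma pairing_adx xi y v : pairing y (lie xi v) = pairing (adx xi y) v.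
Proof.
rewrite {1}(row_sum_delta v) lie_sumr pairing_sumr [RHS]/pairing.
by apply: eq_bigr => j _; rewrite lieZr pairingZr mxE mulrC.
Qed.

Lemma grad_linp (c : 'I_n -> C) x : grad (linp c) x = \row_j c j.
Proof. by apply/rowP => j; rewrite !mxE mderiv_linp mevalC. Qed.

Lemma meval_linp_row (v : V) x : ev (linp (fun i => v 0 i)) x = pairing x v.
Proof. by rewrite evE meval_linp /pairing; apply: eq_bigr => i _; rewrite mulrC. Qed.

Lemma HamE xi p : Ham lie xi p =
  \sum_k linp (fun i => (lie xi (delta_mx 0 k)) 0 i) * p^`M(k).
Proof. by rewrite Ham.unlock. Qed.

Lemma Ham_eval xi p x : ev (Ham lie xi p) x = pairing x (lie xi (grad p x)).
Proof.
rewrite pairing_adx HamE ev_sum /pairing; apply: eq_bigr => k _.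
by rewrite evM meval_linp_row !mxE evE.
Qed.

Lemma HamZ xi c p : Ham lie xi (c *: p) = c *: Ham lie xi p.
Proof.
rewrite !HamE scaler_sumr; apply: eq_bigr => k _.
by rewrite mderivZ scalerAr.
Qed.

Lemma grad_Ham eta p x :
  grad (Ham lie eta p) x = lie eta (grad p x)
    + \sum_k pairing x (lie eta (delta_mx 0 k)) *: grad (p^`M(k)) x.
Proof.
rewrite HamE grad_sum.
rewrite (eq_bigr (fun k => pairing x (lie eta (delta_mx 0 k)) *: grad (p^`M(k)) x
   + ev (p^`M(k)) x *: lie eta (delta_mx 0 k))); last first.
  move=> k _; rewrite gradM' meval_linp_row grad_linp; congr (_ + _ *: _).
  by apply/rowP => j; rewrite mxE.
rewrite big_split /= addrC; congr (_ + _).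
rewrite {1}(row_sum_delta (grad p x)) lie_sumr; apply: eq_bigr => k _.
by rewrite lieZr grad_ev.
Qed.

Lemma Hsym p (u w : V) x :
  \sum_k u 0 k * pairing w (grad (p^`M(k)) x) =
  \sum_k w 0 k * pairing u (grad (p^`M(k)) x).
Proof.
rewrite /pairing.
under eq_bigr do rewrite mulr_sumr.
under [RHS]eq_bigr do rewrite mulr_sumr.
rewrite exchange_big /=; apply: eq_bigr => j _; apply: eq_bigr => k _.
by rewrite !mxE mderiv_comm mulrCA.
Qed.

End Lie2.



HB.lock Definition Dop (R : realType) (n : nat) (chi : 'rV[R[i]]_n) (p : {mpoly R[i][n]}) : {mpoly R[i][n]} :=
  \sum_k chi 0 k *: p^`M(k).

Lemma exists_last_nz (T : nzRingType) (f : nat -> T) N :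
  f 0%N != 0 -> f N = 0 -> exists k, f k != 0 /\ f k.+1 = 0.
Proof.
elim: N => [|N IH] h0 hN; first by rewrite hN eqxx in h0.
case: (eqVneq (f N) 0) => [fN|fN]; first exact: IH.
by exists N.
Qed.

Lemma pairingE (R : realType) (n : nat) (x y : 'rV[R[i]]_n) :
  pairing x y = \sum_k x 0 k * y 0 k.
Proof. by []. Qed.

Section Lie3.
Variable R : realType.
Local Notation C := R[i].
Variable n : nat.
Local Notation V := 'rV[C]_n.
Implicit Types (x y xi eta : V) (p q g : {mpoly C[n]}).
Variable lie : V -> V -> V.
Hypothesis Hlie : is_lie_bracket lie.
Local Notation lieAC := (lieAC Hlie).
Local Notation lieDl := (lieDl Hlie).
Local Notation lieDr := (lieDr Hlie).
Local Notation lieZl := (lieZl Hlie).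
Local Notation lieZr := (lieZr Hlie).
Local Notation lie0l := (lie0l Hlie).
Local Notation lie0r := (lie0r Hlie).
Local Notation lieNl := (lieNl Hlie).
Local Notation lieNr := (lieNr Hlie).
Local Notation lie_suml := (lie_suml Hlie).
Local Notation lie_sumr := (lie_sumr Hlie).
Local Notation Ham := (Ham lie).
Local Notation adx := (adx lie).
Local Notation pairing_adx := (pairing_adx Hlie).
Local Notation grad_Ham := (grad_Ham Hlie).
Local Notation Ham_eval := (Ham_eval Hlie).

Lemma Ham_jacobi xi eta p x :
  ev (Ham xi (Ham eta p)) x - ev (Ham eta (Ham xi p)) x = ev (Ham (lie xi eta) p) x.
Proof.
rewrite !Ham_eval !grad_Ham !lieDr !pairingDr !lie_sumr !pairing_sumr.
have E : forall u w : V, \sum_k pairing x (lie u (pairing x (lie w (delta_mx 0 k)) *: grad (p^`M(k)) x))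
    = \sum_k (adx w x) 0 k * pairing (adx u x) (grad (p^`M(k)) x).
  move=> u w; apply: eq_bigr => k _; rewrite lieZr pairingZr mxE; congr (_ * _).
  exact: pairing_adx.
rewrite !E (Hsym p (adx eta x)) opprD addrACA subrr addr0.
have J' : lie xi (lie eta (grad p x)) - lie eta (lie xi (grad p x)) = lie (lie xi eta) (grad p x).
  have J := lie_jacobi Hlie xi eta (grad p x).
  rewrite (lieAC (grad p x) xi) lieNr (lieAC (grad p x) (lie xi eta)) in J.
  by move/eqP: J; rewrite subr_eq0 => /eqP.
by rewrite -J' pairingDr pairingNr.
Qed.



Lemma DopE chi p : Dop chi p = \sum_k chi 0 k *: p^`M(k).
Proof. by rewrite Dop.unlock. Qed.

Lemma Dop_eval chi p x : ev (Dop chi p) x = pairing chi (grad p x).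
Proof.
rewrite DopE ev_sum (pairingE chi).
by under eq_bigr => k _ do rewrite evZ -grad_ev.

Qed.

Lemma DopZ chi c p : Dop chi (c *: p) = c *: Dop chi p.
Proof.
rewrite !DopE scaler_sumr; apply: eq_bigr => k _.
by rewrite mderivZ !scalerA mulrC.
Qed.

Lemma grad_Dop chi p x : grad (Dop chi p) x = \sum_k chi 0 k *: grad (p^`M(k)) x.
Proof. by rewrite DopE grad_sum; apply: eq_bigr => k _; rewrite gradZ. Qed.

Lemma Dop_Ham chi xi p x :
  ev (Dop chi (Ham xi p)) x = pairing chi (lie xi (grad p x)) + ev (Ham xi (Dop chi p)) x.
Proof.
rewrite Dop_eval Ham_eval grad_Ham pairingDr; congr (_ + _).
rewrite grad_Dop lie_sumr !pairing_sumr.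
rewrite (eq_bigr (fun k => (adx xi x) 0 k * pairing chi (grad (p^`M(k)) x))); last first.
  by move=> k _; rewrite pairingZr mxE.
rewrite Hsym; apply: eq_bigr => k _.
by rewrite lieZr pairingZr pairing_adx.
Qed.

Definition SIp g (chi : V) :=
  forall xi x, pairing x (lie xi (grad g x)) = pairing chi xi * ev g x.

Lemma SI_Ham g chi xi : SIp g chi -> Ham xi g = pairing chi xi *: g.
Proof.
move=> H; apply/eqP; rewrite -subr_eq0; apply/eqP; apply: eval_eq0 => x.
by rewrite evB Ham_eval H evZ subrr.
Qed.

Lemma SI_char g chi : SIp g chi -> g != 0 -> forall xi eta, pairing chi (lie xi eta) = 0.
Proof.
move=> H nz xi eta.
have [x hx] := eval_neq0 nz.
have J := Ham_jacobi xi eta g x.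
rewrite !(SI_Ham _ H) !HamZ !(SI_Ham _ H) !evZ in J.
rewrite mulrCA subrr in J.
by move/esym/eqP: J; rewrite mulf_eq0 (negbTE hx) orbF => /eqP.
Qed.

Lemma SI_Dop g chi chi' : SIp g chi -> (forall xi eta, pairing chi' (lie xi eta) = 0) ->
  SIp (Dop chi' g) chi.
Proof.
move=> H Hc xi x.
rewrite -Ham_eval; apply: (addrI (pairing chi' (lie xi (grad g x)))).
by rewrite -Dop_Ham (SI_Ham _ H) DopZ evZ Hc !add0r.
Qed.

Lemma msize_Dop chi p : (msize (Dop chi p) <= (msize p).-1)%N.
Proof.
rewrite DopE; apply: (big_ind (fun q : {mpoly C[n]} => (msize q <= (msize p).-1)%N)).
- by rewrite msize0.
- by move=> q1 q2 h1 h2; apply: (leq_trans (msizeD_le _ _)); rewrite geq_max h1 h2.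
- by move=> k _; apply: (leq_trans (msizeZ_le _ _)); exact: msize_mderiv.
Qed.

Lemma msize_iter_Dop chi p k : (msize (iter k (Dop chi) p) <= msize p - k)%N.
Proof.
elim: k => [|k IH]; first by rewrite subn0.
rewrite iterS; apply: (leq_trans (msize_Dop _ _)).
by rewrite subnS -!subn1 leq_sub2r.
Qed.

Lemma SI_cross p q al be x : SIp p al -> SIp q be ->
  pairing be (grad p x) * ev q x = - (pairing al (grad q x) * ev p x).
Proof.
move=> Hp Hq.
by rewrite -Hq lieAC pairingNr Hp.
Qed.

Lemma K_lemma g chi g' chi' : SIp g chi -> SIp g' chi' -> g != 0 -> g' != 0 ->
  (forall x, pairing chi' (grad g x) = 0) /\ (forall x, pairing chi (grad g' x) = 0).
Proof.
move=> Hg Hg' nz nz'.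
have Hc' := SI_char Hg' nz'.
pose f k := iter k (Dop chi') g.
have fN : f (msize g) = 0.
  apply/eqP; rewrite -msize_poly_eq0 -leqn0.
  by apply: (leq_trans (msize_iter_Dop _ _ _)); rewrite subnn.
have [k [fk fk1]] := @exists_last_nz _ f _ nz fN.
have SIf : forall j, SIp (f j) chi.
  by elim => [|j IH] //; rewrite /f iterS; apply: SI_Dop.
have E1 : Dop chi g' * f k = 0.
  apply: eval_eq0 => x; rewrite evM Dop_eval.
  have := SI_cross x (SIf k) Hg'; rewrite -Dop_eval.
  move: fk1; rewrite /f iterS => ->; rewrite ev0 mul0r => /eqP.
  by rewrite eq_sym oppr_eq0 => /eqP.
have E1' : Dop chi g' = 0.
  by move/eqP: E1; rewrite mulf_eq0 (negbTE fk) orbF => /eqP.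
have H2 : forall x, pairing chi (grad g' x) = 0.
  by move=> x; rewrite -Dop_eval E1' ev0.
have E2 : Dop chi' g * g' = 0.
  apply: eval_eq0 => x; rewrite evM Dop_eval.
  by rewrite (SI_cross x Hg Hg') H2 mul0r oppr0.
split => // x; rewrite -Dop_eval.
by move/eqP: E2; rewrite mulf_eq0 (negbTE nz') orbF => /eqP ->; rewrite ev0.
Qed.

End Lie3.



Lemma coef_arg (K : fieldType) (c : nat -> K) (G : {poly K}) (Q : nat -> {poly K}) :
  G != 0 -> (forall D, (\sum_(d < D) c d *: 'X^d) * G = 'X^D * Q D) -> forall d, c d = 0.
Proof.
move=> nzG H.
have [e [He Hmin]] : exists e, G`_e != 0 /\ forall i, (i < e)%N -> G`_i = 0.
  have exP : exists e, G`_e != 0.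
    by exists (size G).-1; rewrite -lead_coefE lead_coef_eq0.
  case: (ex_minnP exP) => e He Hm; exists e; split => // i lt.
  by apply/eqP; apply: contraTT lt => hi; rewrite -leqNgt; exact: Hm.
elim/ltn_ind => d IH.
have := congr1 (fun p : {poly K} => p`_(d + e)) (H (d + e).+1).
rewrite coefXnM ltnSn mulr_suml coef_sum.
rewrite (bigD1 (Ordinal (leq_addr e d.+1 : (d < (d + e).+1)%N))) //=.
rewrite big1 => [|i /negbTE ne].
  rewrite addr0 -scalerAl coefZ coefXnM ltnNge leq_addr /= addKn => /eqP.
  by rewrite mulf_eq0 (negbTE He) orbF => /eqP.
rewrite -scalerAl coefZ coefXnM.
case: ltnP => [_|le]; first by rewrite mulr0.
case: (ltngtP i d) => [lt|gt|eq].
- by rewrite IH // mul0r.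
- by rewrite Hmin ?mulr0 //; move: gt le; clear; lia.
- by move: ne; rewrite -val_eqE /= eq eqxx.
Qed.

HB.lock Definition lineL (R : realType) (n : nat) (p : {mpoly R[i][n]}) (w c : 'I_n -> R[i]) : {poly R[i]} :=
  line p w c.

Lemma lineL_eval (R : realType) (n : nat) (p : {mpoly R[i][n]}) w c s :
  (lineL p w c).[s] = p.@[fun i => w i + s * c i].
Proof. by rewrite lineL.unlock line_eval. Qed.

Lemma tele_gen (K : comNzRingType) (f q : nat -> K) :
  q 0%N = 0 -> (forall d, f d = q d.+1 - q d) -> forall D, \sum_(0 <= d < D) f d = q D.
Proof.
move=> h0 hs; elim => [|D IH]; first by rewrite big_geq.
by rewrite big_nat_recr //= IH hs addrCA subrr addr0.
Qed.

Section Part3.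
Variable R : realType.
Local Notation C := R[i].
Variable n : nat.
Local Notation V := 'rV[C]_n.
Implicit Types (x y z xi eta : V) (p q g : {mpoly C[n]}).
Variable lie : V -> V -> V.
Hypothesis Hlie : is_lie_bracket lie.
Local Notation lieAC := (lieAC Hlie).
Local Notation lieDl := (lieDl Hlie).
Local Notation lieDr := (lieDr Hlie).
Local Notation lieZl := (lieZl Hlie).
Local Notation lieZr := (lieZr Hlie).
Local Notation lie0l := (lie0l Hlie).
Local Notation lie0r := (lie0r Hlie).
Local Notation lieNl := (lieNl Hlie).
Local Notation lieNr := (lieNr Hlie).
Local Notation adx := (adx lie).
Local Notation pairing_adx := (pairing_adx Hlie).
Local Notation SIp := (SIp lie).

Lemma ev_shift (a : V) (lam : C) g x : ev (shift_poly a lam g) x = ev g (x + lam *: a).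
Proof.
rewrite !evE /shift_poly.
change ((g \mPo tr (fun k => lam * a 0 k)).@[valu x] = g.@[valu (x + lam *: a)]).
rewrite meval_comp_tr; apply: meval_eq => i.
by rewrite /valu !mxE.
Qed.

Lemma grad_shift (a : V) (lam : C) g x : grad (shift_poly a lam g) x = grad g (x + lam *: a).
Proof.
apply/rowP => k; rewrite !grad_ev /shift_poly.
change (ev ((g \mPo tr (fun k => lam * a 0 k))^`M(k)) x = ev (g^`M(k)) (x + lam *: a)).
rewrite mderiv_comp_tr.
change (ev (shift_poly a lam (g^`M(k))) x = ev (g^`M(k)) (x + lam *: a)).
exact: ev_shift.
Qed.

Lemma ev_scale_homog d p (s : C) z : p \is d.-homog -> ev p (s *: z) = s ^+ d * ev p z.
Proof.
move=> Hp; rewrite !evE -(homog_eval_scale s _ Hp); apply: meval_eq => i.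
by rewrite /valu mxE.
Qed.

Lemma grad_scale_homog d p (s : C) z : p \is d.-homog ->
  grad p (s *: z) = s ^+ d.-1 *: grad p z.
Proof.
move=> Hp; apply/rowP => k; rewrite grad_ev [RHS]mxE grad_ev.
by rewrite (ev_scale_homog _ _ (homog_mderiv k Hp)).
Qed.

Variable a : V.
Variable F : nat -> {mpoly C[n]}.
Hypothesis HF : forall d xi y,
  pairing a (lie xi (grad (F d.+1) y)) + pairing y (lie xi (grad (F d) y)) = 0.
Hypothesis Hhom : forall d, F d \is d.-homog.

Lemma HF0 y : grad (F 0) y = 0.
Proof. exact: grad_homog0 (Hhom 0). Qed.

Lemma Aform e (s : C) z (w : V) :
  pairing (s *: z) (lie (grad (F e) (s *: z)) w) = s ^+ e * pairing z (lie (grad (F e) z) w).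
Proof.
case: e => [|e]; first by rewrite !HF0 lie0l !pairing0r mulr0.
rewrite (grad_scale_homog _ _ (Hhom e.+1)) /= lieZl pairingZr pairingZl.
by rewrite mulrA -exprSr.
Qed.

Variable g : {mpoly C[n]}.
Variable chi : V.
Hypothesis SIg : SIp g chi.
Hypothesis nzg : g != 0.

Section FixZ.
Variable z : V.
Local Notation G := (lineL g (fun i => a 0 i) (fun i => z 0 i)).
Local Notation Q d := (lineL (Dop (adx (grad (F d) z) z) g) (fun i => a 0 i) (fun i => z 0 i)).
Local Notation c d := (pairing chi (grad (F d) z)).
Local Notation Qf d s := (pairing z (lie (grad (F d) z) (grad g (a + s *: z)))).

Lemma G_eval s : G.[s] = ev g (a + s *: z).
Proof. by rewrite lineL_eval evE; apply: meval_eq => i; rewrite /valu !mxE. Qed.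

Lemma Q_eval d s : (Q d).[s] = Qf d s.
Proof.
rewrite lineL_eval pairing_adx -Dop_eval evE; apply: meval_eq => i.
by rewrite /valu !mxE.
Qed.

Lemma step_alg (K : comNzRingType) (L Pa P1 P0 X Y : K) :
  L = Pa + P1 -> - Pa + - P0 = 0 -> P1 = X -> P0 = Y -> L = X - Y.
Proof.
move=> -> h <- <-; move/eqP: h; rewrite -opprD oppr_eq0 addr_eq0 => /eqP ->.
by rewrite addrC.
Qed.

Lemma step_id d s :
  s ^+ d * c d.+1 * ev g (a + s *: z) = s ^+ d.+1 * Qf d.+1 s - s ^+ d * Qf d s.
Proof.
have Z : grad (F d.+1) (s *: z) = s ^+ d *: grad (F d.+1) z := grad_scale_homog _ _ (Hhom d.+1).
have H1 : s ^+ d * c d.+1 * ev g (a + s *: z) =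
   pairing (a + s *: z) (lie (grad (F d.+1) (s *: z)) (grad g (a + s *: z))).
  by rewrite SIg Z pairingZr.
rewrite pairingDl in H1.
apply: (step_alg H1 _ (Aform d.+1 s z _) (Aform d s z _)).
have H3 := HF d (grad g (a + s *: z)) (s *: z).
by rewrite (lieAC (grad g _)) pairingNr (lieAC (grad g _)) pairingNr in H3.
Qed.

Lemma tele D s :
  \sum_(0 <= d < D) s ^+ d * c d.+1 * ev g (a + s *: z) = s ^+ D * Qf D s.
Proof.
apply: (tele_gen (q := fun d => s ^+ d * Qf d s)).
  by rewrite HF0 lie0l pairing0r mulr0.
move=> d; exact: (step_id d s).
Qed.

Lemma horner_id (K : numFieldType) (P1 P2 P3 P4 : {poly K}) (f1 f2 f3 f4 : K -> K) :
  (forall s, P1.[s] = f1 s) -> (forall s, P2.[s] = f2 s) ->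
  (forall s, P3.[s] = f3 s) -> (forall s, P4.[s] = f4 s) ->
  (forall s, f1 s * f2 s = f3 s * f4 s) -> P1 * P2 = P3 * P4.
Proof.
move=> h1 h2 h3 h4 h; apply/eqP; rewrite -subr_eq0; apply/eqP.
apply: (@poly_eq0_nz _) => s _.
by rewrite hornerD hornerN !hornerM h1 h2 h3 h4 h subrr.
Qed.

Lemma poly_id D :
  (\sum_(d < D) c d.+1 *: 'X^d) * G = 'X^D * Q D.
Proof.
apply: (horner_id (f1 := fun s => \sum_(0 <= d < D) s ^+ d * c d.+1)
   (f2 := fun s => ev g (a + s *: z)) (f3 := fun s => s ^+ D) (f4 := fun s => Qf D s)).
- move=> s; rewrite horner_sum big_mkord; apply: eq_bigr => d _.
  by rewrite hornerZ hornerXn mulrC.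
- exact: G_eval.
- by move=> s; rewrite hornerXn.
- exact: Q_eval.
- by move=> s; rewrite -tele mulr_suml.
Qed.

Lemma c_zero_or : G != 0 -> forall j, c j = 0.
Proof.
move=> nzG [|j]; first by rewrite HF0 pairing0r.
exact: (coef_arg (c := fun d => c d.+1) nzG poly_id).
Qed.

End FixZ.

Lemma c_zero j z : pairing chi (grad (F j) z) = 0.
Proof.
have key : forall z, pairing chi (grad (F j) z) * ev g (z + a) = 0.
  move=> w; case: (eqVneq (lineL g (fun i => a 0 i) (fun i => w 0 i)) 0) => [G0|nzG].
    have := G_eval w 1; rewrite G0 horner0 scale1r addrC => <-.
    by rewrite mulr0.
  by rewrite (c_zero_or nzG) mul0r.
have nzs : shift_poly a 1 g != 0.
  apply/eqP => hs; move/eqP: nzg; apply; apply: eval_eq0 => w.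
  have := ev_shift a 1 g (w - a); rewrite hs ev0 scale1r subrK => ->.
  by [].
have E : Dop chi (F j) * shift_poly a 1 g = 0.
  by apply: eval_eq0 => w; rewrite evM Dop_eval ev_shift scale1r key.
move/eqP: E; rewrite mulf_eq0 (negbTE nzs) orbF => /eqP E.
by rewrite -Dop_eval E ev0.
Qed.

Lemma part3 (lam : C) x j :
  pairing x (lie (grad (F j) x) (grad (shift_poly a lam g) x)) = 0 /\
  pairing a (lie (grad (F j) x) (grad (shift_poly a lam g) x)) = 0.
Proof.
rewrite grad_shift.
have E1 : forall j, pairing x (lie (grad (F j) x) (grad g (x + lam *: a)))
   + lam * pairing a (lie (grad (F j) x) (grad g (x + lam *: a))) = 0.
  move=> k; rewrite -pairingZl -pairingDl SIg c_zero.
  by rewrite mul0r.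
have E2 : forall j, pairing a (lie (grad (F j.+1) x) (grad g (x + lam *: a)))
    = - pairing x (lie (grad (F j) x) (grad g (x + lam *: a))).
  move=> k; have := HF k (grad g (x + lam *: a)) x.
  rewrite (lieAC (grad g _)) pairingNr (lieAC (grad g _)) pairingNr => /eqP.
  by rewrite -opprD oppr_eq0 addr_eq0 => /eqP.
elim: j => [|j [IH1 IH2]]; first by rewrite HF0 !lie0l !pairing0r.
have h2 : pairing a (lie (grad (F j.+1) x) (grad g (x + lam *: a))) = 0.
  by rewrite E2 IH1 oppr0.
split; last exact: h2.
by have := E1 j.+1; rewrite h2 mulr0 addr0.
Qed.

End Part3.



Lemma alg_neq (K : fieldType) (X A lam mu : K) : lam != mu ->
  - X + lam * - A = 0 -> X + mu * A = 0 -> A = 0 /\ X = 0.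
Proof.
move=> ne h1 h2.
have h1' : X + lam * A = 0.
  by move/eqP: h1; rewrite mulrN -opprD oppr_eq0 => /eqP.
have hA : (mu - lam) * A = 0.
  have : (X + mu * A) - (X + lam * A) = 0 by rewrite h2 h1' subrr.
  by rewrite opprD addrACA subrr add0r -mulrBl.
have A0 : A = 0.
  by move/eqP: hA; rewrite mulf_eq0 subr_eq0 eq_sym (negbTE ne) /= => /eqP.
by split => //; move: h2; rewrite A0 mulr0 addr0.
Qed.

Section Part4.
Variable R : realType.
Local Notation C := R[i].
Variable n : nat.
Local Notation V := 'rV[C]_n.
Implicit Types (x y z xi eta : V).
Variable lie : V -> V -> V.
Hypothesis Hlie : is_lie_bracket lie.
Local Notation lieAC := (lieAC Hlie).
Local Notation adx := (adx lie).
Local Notation pairing_adx := (pairing_adx Hlie).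
Local Notation SIp := (SIp lie).
Variable a : V.
Variables (g g' : {mpoly C[n]}) (chi chi' : V).
Hypothesis SIg : SIp g chi.
Hypothesis SIg' : SIp g' chi'.
Hypothesis nzg : g != 0.
Hypothesis nzg' : g' != 0.

Let K1 : forall y, pairing chi' (grad g y) = 0.
Proof. by have [] := K_lemma Hlie SIg SIg' nzg nzg'. Qed.
Let K2 : forall y, pairing chi (grad g' y) = 0.
Proof. by have [] := K_lemma Hlie SIg SIg' nzg nzg'. Qed.

Lemma p4_E1 x lam mu :
  - pairing x (lie (grad g (x + lam *: a)) (grad g' (x + mu *: a)))
  + lam * - pairing a (lie (grad g (x + lam *: a)) (grad g' (x + mu *: a))) = 0.
Proof.
have E := SIg (grad g' (x + mu *: a)) (x + lam *: a).
rewrite K2 mul0r pairingDl pairingZl (lieAC (grad g' _)) !pairingNr in E.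
exact: E.
Qed.

Lemma p4_E2 x lam mu :
  pairing x (lie (grad g (x + lam *: a)) (grad g' (x + mu *: a)))
  + mu * pairing a (lie (grad g (x + lam *: a)) (grad g' (x + mu *: a))) = 0.
Proof.
have E := SIg' (grad g (x + lam *: a)) (x + mu *: a).
rewrite K1 mul0r pairingDl pairingZl in E.
exact: E.
Qed.

Lemma p4_neq x lam mu : lam != mu ->
  pairing a (lie (grad g (x + lam *: a)) (grad g' (x + mu *: a))) = 0 /\
  pairing x (lie (grad g (x + lam *: a)) (grad g' (x + mu *: a))) = 0.
Proof. by move=> ne; apply: alg_neq ne (p4_E1 x lam mu) (p4_E2 x lam mu). Qed.

Lemma p4_eq w : pairing a (lie (grad g w) (grad g' w)) = 0.
Proof.
pose L := lineL (Dop (adx (grad g w) a) g') (fun i => w 0 i) (fun i => a 0 i).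
have HL : forall s, L.[s] = pairing a (lie (grad g w) (grad g' (w + s *: a))).
  move=> s; rewrite /L lineL_eval pairing_adx -Dop_eval evE.
  by apply: meval_eq => i; rewrite /valu !mxE.
have L0 : L = 0.
  apply: (@poly_eq0_nz _) => s ns; rewrite HL.
  have := p4_neq w (lam := 0) (mu := s); rewrite eq_sym => /(_ ns) [h _].
  by move: h; rewrite scale0r addr0.
by have := HL 0; rewrite L0 horner0 scale0r addr0 => <-.
Qed.

Lemma part4 x lam mu :
  pairing x (lie (grad (shift_poly a lam g) x) (grad (shift_poly a mu g') x)) = 0 /\
  pairing a (lie (grad (shift_poly a lam g) x) (grad (shift_poly a mu g') x)) = 0.
Proof.
rewrite [X in lie X _](grad_shift a lam g x) [X in lie _ X](grad_shift a mu g' x).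
case: (eqVneq lam mu) => [<-|ne]; last by have [h1 h2] := p4_neq x ne; split.
have hA := p4_eq (x + lam *: a).
split; last exact: hA.
by have := p4_E1 x lam lam; rewrite hA oppr0 mulr0 addr0 => /eqP; rewrite oppr_eq0 => /eqP.
Qed.

End Part4.

Unset Implicit Arguments.
Set Strict Implicit.


Lemma SIof (R : realType) (n : nat) (lie : 'rV[R[i]]_n -> 'rV[R[i]]_n -> 'rV[R[i]]_n)
  (g : {mpoly R[i][n]}) : semi_invariant lie g -> g != 0 /\ exists chi, SIp lie g chi.
Proof.
move=> [nz [chi H]]; split => //; exists chi => xi x.
have E := H (linp (fun i => xi 0 i)) x.
rewrite /lp_bracket grad_linp -evE in E.
have R0 : \row_j xi 0 j = xi by apply/rowP => j; rewrite mxE.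
by rewrite R0 in E; exact: E.
Qed.
Arguments SIof {R n lie g}.

Theorem mainTheorem4 (R : realType) (n : nat)
  (lie : 'rV[R[i]]_n -> 'rV[R[i]]_n -> 'rV[R[i]]_n)
  (Hlie : is_lie_bracket lie)
  (a : 'rV[R[i]]_n) (Ha : regular lie a)
  (f : 'I_(stab_dim lie a) -> nat -> {mpoly R[i][n]})
  (Hinv : forall k, local_invariant_at lie a (f k))
  (Hbasis : let D := \matrix_(k < stab_dim lie a, j < n) (germ_diff_at (f k)) 0 j in
            row_free D && (D == stab_mx lie a)%MS) :
  forall p q : {mpoly R[i][n]},
    gen_subalg (Fsi_generators lie a f) p ->
    gen_subalg (Fsi_generators lie a f) q ->
    (forall x, lp_bracket lie p q x = 0) /\
    (forall x, frozen_bracket lie a p q x = 0).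
Proof.
move=> p q Gp Gq.
have HFk : forall k d xi y, pairing a (lie xi (grad (f k d.+1) y))
    + pairing y (lie xi (grad (f k d) y)) = 0.
  by move=> k; have [_ h] := Hinv k.
have Hhomk : forall k d, f k d \is d.-homog.
  by move=> k; have [[h _] _] := Hinv k.
have HF0k : forall k y, grad (f k 0) y = 0.
  by move=> k y; apply: grad_homog0; exact: Hhomk.
have Hpair : forall p q, Fsi_generators lie a f p -> Fsi_generators lie a f q ->
   (forall x, brk lie (fun x => x) p q x = 0) /\ (forall x, brk lie (fun _ => a) p q x = 0).
  move=> p1 q1 [[k [j [_ ->]]]|[g [lam [Sg ->]]]] [[k' [j' [_ ->]]]|[g' [mu [Sg' ->]]]].
  - split => x.
      exact: (FF_lp Hlie (HFk k) (HFk k') (HF0k k') j' j x).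
    exact: (FF_fr Hlie (HFk k) (HFk k') (HF0k k') j' j x).
  - have [nz [chi SI]] := SIof Sg'.
    split => x.
      exact: (part3 Hlie (HFk k) (Hhomk k) SI nz mu x j).1.
    exact: (part3 Hlie (HFk k) (Hhomk k) SI nz mu x j).2.
  - have [nz [chi SI]] := SIof Sg.
    split => x; rewrite (brkAC Hlie); apply/eqP; rewrite oppr_eq0; apply/eqP.
      exact: (part3 Hlie (HFk k') (Hhomk k') SI nz lam x j').1.
    exact: (part3 Hlie (HFk k') (Hhomk k') SI nz lam x j').2.
  - have [nz [chi SI]] := SIof Sg.
    have [nz' [chi' SI']] := SIof Sg'.
    split => x.
      exact: (part4 Hlie a SI SI' nz nz' x lam mu).1.
    exact: (part4 Hlie a SI SI' nz nz' x lam mu).2.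
split => x.
  exact: (brk_gen Hlie (Y := fun x => x) (fun p q Hp Hq => (Hpair p q Hp Hq).1) Gp Gq x).
exact: (brk_gen Hlie (Y := fun _ => a) (fun p q Hp Hq => (Hpair p q Hp Hq).2) Gp Gq x).
Qed.
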